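(* Let $\varepsilon>0$. The equilibrium point $$\overline{\mathbf x_0}=\Big(-\frac{a}{a_1},-\frac{b}{a_2},-\frac{c}{a_3}\Big)$$ of the $\varepsilon$-revised system $$\dot{\mathbf x}=\mathbf x\times\mathbf m(\mathbf x)+\varepsilon[(\mathbf x\times\mathbf m(\mathbf x))\times\mathbf m(\mathbf x)]$$ is Lyapunov stable.
   Context: Fix constants $0<a_1<a_2<a_3$ and $a,b,c\in\mathbb R$. Set $\mathbf m(\mathbf x)=(a_1x^1+a,\ a_2x^2+b,\ a_3x^3+c)$; $\times$ is the cross product in $\mathbb R^3$. Note that $\mathbf m(\overline{\mathbf x_0})=\mathbf 0$. *)

(* Defs.v *)
From Stdlib Require Import Reals Lra.
Open Scope R_scope.

Definition vec3 := (R * R * R)%type.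

Definition v1 (u : vec3) : R := fst (fst u).
Definition v2 (u : vec3) : R := snd (fst u).
Definition v3 (u : vec3) : R := snd u.

Definition vadd (u v : vec3) : vec3 := (v1 u + v1 v, v2 u + v2 v, v3 u + v3 v).
Definition vsub (u v : vec3) : vec3 := (v1 u - v1 v, v2 u - v2 v, v3 u - v3 v).
Definition vscale (k : R) (u : vec3) : vec3 := (k * v1 u, k * v2 u, k * v3 u).

Definition vnorm (u : vec3) : R := sqrt (v1 u ^ 2 + v2 u ^ 2 + v3 u ^ 2).

Definition cross (u v : vec3) : vec3 :=
  (v2 u * v3 v - v3 u * v2 v,
   v3 u * v1 v - v1 u * v3 v,
   v1 u * v2 v - v2 u * v1 v).

Definition mvec (a1 a2 a3 a b c : R) (x : vec3) : vec3 :=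
  (a1 * v1 x + a, a2 * v2 x + b, a3 * v3 x + c).

Definition revised_field (a1 a2 a3 a b c eps : R) (x : vec3) : vec3 :=
  let m := mvec a1 a2 a3 a b c x in
  vadd (cross x m) (vscale eps (cross (cross x m) m)).

Definition is_solution_on (F : vec3 -> vec3) (T : R) (x : R -> vec3) : Prop :=
  forall t, 0 <= t < T ->
    derivable_pt_lim (fun s => v1 (x s)) t (v1 (F (x t))) /\
    derivable_pt_lim (fun s => v2 (x s)) t (v2 (F (x t))) /\
    derivable_pt_lim (fun s => v3 (x s)) t (v3 (F (x t))).

(* Lyapunov stability of the point p for x' = F(x): for every e > 0 there is
   d > 0 such that every solution starting within d of p stays within e of p
   for all forward times at which it is defined (on any interval [0,T); in
   particular this covers solutions defined on all of [0, +oo)). *)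
Definition lyapunov_stable (F : vec3 -> vec3) (p : vec3) : Prop :=
  forall e, 0 < e -> exists d, 0 < d /\
    forall (T : R) (x : R -> vec3), is_solution_on F T x ->
      vnorm (vsub (x 0) p) < d ->
      forall t, 0 <= t < T -> vnorm (vsub (x t) p) < e.

(* Main.v *)
Require Import Defs.
From Stdlib Require Import Reals Lra.
Open Scope R_scope.

Lemma sq_der (g : R -> R) (k q t l : R) :
  derivable_pt_lim g t l ->
  derivable_pt_lim (fun s => k * ((g s - q) * (g s - q))) t (k * (2 * (g t - q) * l)).
Proof.
  intro H.
  assert (Hm : derivable_pt_lim (fun s => g s - q) t (l - 0)).
  { apply (derivable_pt_lim_minus g (fun _ => q)); [exact H | apply derivable_pt_lim_const]. }
  assert (Hp := derivable_pt_lim_mult _ _ _ _ _ Hm Hm).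
  assert (Hs := derivable_pt_lim_scal _ k _ _ Hp).
  unfold mult_real_fct, mult_fct in Hs.
  replace (k * (2 * (g t - q) * l)) with (k * ((l - 0) * (g t - q) + (g t - q) * (l - 0))) by ring.
  exact Hs.
Qed.

Lemma sum3_der (f1 f2 f3 : R -> R) t l1 l2 l3 :
  derivable_pt_lim f1 t l1 -> derivable_pt_lim f2 t l2 -> derivable_pt_lim f3 t l3 ->
  derivable_pt_lim (fun s => f1 s + f2 s + f3 s) t (l1 + l2 + l3).
Proof.
  intros H1 H2 H3.
  apply (derivable_pt_lim_plus (fun s => f1 s + f2 s) f3); [|exact H3].
  apply (derivable_pt_lim_plus f1 f2); assumption.
Qed.

Theorem theorem6p2 (a1 a2 a3 a b c eps : R) :
  0 < a1 -> a1 < a2 -> a2 < a3 -> 0 < eps ->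
  lyapunov_stable (revised_field a1 a2 a3 a b c eps)
    (- a / a1, - b / a2, - c / a3).
Proof.
  intros h1 h2 h3 he e He.
  set (p1 := - a / a1). set (p2 := - b / a2). set (p3 := - c / a3).
  assert (Ha3 : 0 < a3) by lra.
  assert (Hq : 0 < a1 / a3) by (apply Rdiv_lt_0_compat; lra).
  exists (e * sqrt (a1 / a3)). split.
  { apply Rmult_lt_0_compat; [lra | apply sqrt_lt_R0; exact Hq]. }
  intros T x Hsol H0 t Ht.
  set (V := fun s => a1 * ((v1 (x s) - p1) * (v1 (x s) - p1))
                   + a2 * ((v2 (x s) - p2) * (v2 (x s) - p2))
                   + a3 * ((v3 (x s) - p3) * (v3 (x s) - p3))).
  assert (Hd : forall s, 0 <= s < T -> derivable_pt_lim V s 0).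
  { intros s Hs. destruct (Hsol s Hs) as [D1 [D2 D3]].
    pose proof (sum3_der _ _ _ s _ _ _ (sq_der _ a1 p1 _ _ D1)
                   (sq_der _ a2 p2 _ _ D2) (sq_der _ a3 p3 _ _ D3)) as HD.
    unfold V. match type of HD with derivable_pt_lim _ _ ?z => replace 0 with z; [exact HD|] end.
    destruct (x s) as [[y1 y2] y3]. unfold revised_field, vadd, vscale, cross, mvec, v1, v2, v3, p1, p2, p3; simpl.
    field; lra. }
  assert (HV : V t = V 0).
  { destruct (Req_dec t 0) as [->|Ht0]; [reflexivity|].
    destruct (MVT_cor2 V (fun _ => 0) 0 t) as [cc [Hc _]]; [lra| |].
    - intros cc Hc. apply Hd. lra.
    - lra. }
  unfold vnorm in *. unfold vsub, v1, v2, v3 in *; simpl in *.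
  unfold V, v1, v2, v3 in HV. fold p1 p2 p3 in H0 |- *.
  set (y1 := fst (fst (x t)) - p1) in *. set (y2 := snd (fst (x t)) - p2) in *.
  set (y3 := snd (x t) - p3) in *.
  set (z1 := fst (fst (x 0)) - p1) in *. set (z2 := snd (fst (x 0)) - p2) in *.
  set (z3 := snd (x 0) - p3) in *.
  set (S0 := z1 * (z1 * 1) + z2 * (z2 * 1) + z3 * (z3 * 1)) in *.
  assert (HS0 : 0 <= S0) by (unfold S0; nra).
  assert (Hs0 : S0 < e ^ 2 * (a1 / a3)).
  { pose proof (sqrt_pos S0). pose proof (sqrt_sqrt S0 HS0).
    pose proof (sqrt_sqrt (a1/a3) (Rlt_le _ _ Hq)). pose proof (sqrt_pos (a1/a3)).
    set (r := sqrt S0) in *. set (q := sqrt (a1/a3)) in *.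
    assert (e*q - r > 0) by lra.
    assert ((e*q - r)*(e*q + r) > 0) by (apply Rmult_gt_0_compat; nra).
    rewrite <- H1, <- H2. nra. }
  assert (Hs0' : a3 * S0 < a1 * e ^ 2).
  { replace (a1 * e ^ 2) with (a3 * (e ^ 2 * (a1 / a3))) by (field; lra). nra. }
  assert (Ht2 : y1 * (y1 * 1) + y2 * (y2 * 1) + y3 * (y3 * 1) < e ^ 2).
  { assert (a1 * (y1 * (y1 * 1) + y2 * (y2 * 1) + y3 * (y3 * 1)) < a1 * e ^ 2); [|nra].
    unfold S0 in Hs0'. nra. }
  rewrite <- (sqrt_pow2 e) by lra.
  apply sqrt_lt_1_alt. split; [nra | exact Ht2].
Qed.
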